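(* Let $\kappa=(\xi,\eta)\in S\mathbb{H}$. Then the tangent space to $S\mathbb{H}$ at $\kappa$ is $$T_\kappa S\mathbb{H}=\{(\alpha,\beta)\in\mathbb{H}^2:\alpha\bar\eta+\xi\bar\beta\in\mathcal{V}\},$$ and it decomposes into orthogonal real subspaces as $$T_\kappa S\mathbb{H}=\kappa\mathbb{H}\oplus\check\kappa\mathcal{V}=\kappa\mathbb{R}\oplus\kappa\mathbb{I}\oplus\check\kappa\mathcal{V}.$$
   Context: For $q=a+bi+cj+dk\in\mathbb{H}$, $q'=a-bi-cj+dk$, $\bar q=a-bi-cj-dk$. $\mathbb{I}=\mathrm{span}_\mathbb{R}\{i,j,k\}$, $\mathcal{V}=\mathrm{span}_\mathbb{R}\{1,i,j\}$. $S\mathbb{H}=\{(\xi,\eta)\in\mathbb{H}^2\setminus\{(0,0)\}:\xi\bar\eta\in\mathcal{V}\}$, a smooth submanifold of $\mathbb{H}^2$. For $\kappa=(\xi,\eta)$, $\check\kappa=(\eta',-\xi')$, and $\kappa X=\{(\xi x,\eta x):x\in X\}$. Orthogonality is with respect to the real inner product $\langle\kappa_1,\kappa_2\rangle=\mathrm{Re}(\xi_1\bar\xi_2+\eta_1\bar\eta_2)$ on $\mathbb{H}^2$. *)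

(* Defs.v *)
From Stdlib Require Import Reals.
From Coquelicot Require Import Coquelicot.
Open Scope R_scope.

(* Quaternions q = q0 + q1 i + q2 j + q3 k, as a record of four reals. *)
Record quat := Quat { q0 : R; q1 : R; q2 : R; q3 : R }.

Definition qadd (p q : quat) : quat :=
  Quat (q0 p + q0 q) (q1 p + q1 q) (q2 p + q2 q) (q3 p + q3 q).

(* Hamilton product, with i^2 = j^2 = k^2 = ijk = -1. *)
Definition qmul (p q : quat) : quat :=
  Quat (q0 p * q0 q - q1 p * q1 q - q2 p * q2 q - q3 p * q3 q)
       (q0 p * q1 q + q1 p * q0 q + q2 p * q3 q - q3 p * q2 q)
       (q0 p * q2 q - q1 p * q3 q + q2 p * q0 q + q3 p * q1 q)
       (q0 p * q3 q + q1 p * q2 q - q2 p * q1 q + q3 p * q0 q).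

Definition qopp (q : quat) : quat := Quat (- q0 q) (- q1 q) (- q2 q) (- q3 q).
Definition qzero : quat := Quat 0 0 0 0.

Definition qconj (q : quat) : quat := Quat (q0 q) (- q1 q) (- q2 q) (- q3 q).
Definition qprime (q : quat) : quat := Quat (q0 q) (- q1 q) (- q2 q) (q3 q).

(* V = span_R {1, i, j} ; I = span_R {i, j, k} ; R = real quaternions *)
Definition inV (q : quat) : Prop := q3 q = 0.
Definition inI (q : quat) : Prop := q0 q = 0.
Definition inReal (q : quat) : Prop := q1 q = 0 /\ q2 q = 0 /\ q3 q = 0.
Definition inH (q : quat) : Prop := True.

Definition H2 := (quat * quat)%type.

Definition h2add (u v : H2) : H2 := (qadd (fst u) (fst v), qadd (snd u) (snd v)).

Definition h2inner (u v : H2) : R :=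
  q0 (qadd (qmul (fst u) (qconj (fst v))) (qmul (snd u) (qconj (snd v)))).

Definition SH (kp : H2) : Prop :=
  kp <> (qzero, qzero) /\ inV (qmul (fst kp) (qconj (snd kp))).

Definition check (kp : H2) : H2 := (qprime (snd kp), qopp (qprime (fst kp))).

Definition rmulset (kp : H2) (X : quat -> Prop) (v : H2) : Prop :=
  exists x, X x /\ v = (qmul (fst kp) x, qmul (snd kp) x).

Definition coord (n : nat) (u : H2) : R :=
  match n%nat with
  | 0 => q0 (fst u) | 1 => q1 (fst u) | 2 => q2 (fst u) | 3 => q3 (fst u)
  | 4 => q0 (snd u) | 5 => q1 (snd u) | 6 => q2 (snd u) | 7 => q3 (snd u)
  | _ => 0%R
  end.

Definition smooth_curve (c : R -> H2) : Prop :=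
  forall (n : nat), (n < 8)%nat ->
    forall (m : nat) (t : R), ex_derive_n (fun s => coord n (c s)) m t.

Definition tangent_space (S : H2 -> Prop) (p : H2) (v : H2) : Prop :=
  exists (c : R -> H2) (eps : R),
    0 < eps /\ smooth_curve c /\
    (forall t, Rabs t < eps -> S (c t)) /\ c 0 = p /\
    (forall n, (n < 8)%nat -> is_derive (fun s => coord n (c s)) 0 (coord n v)).

Definition setsum2 (A B : H2 -> Prop) (v : H2) : Prop :=
  exists a b, A a /\ B b /\ v = h2add a b.

Definition orth (A B : H2 -> Prop) : Prop :=
  forall a b, A a -> B b -> h2inner a b = 0.

(* Main.v *)
Require Import Defs.
From Stdlib Require Import Reals.
From Coquelicot Require Import Coquelicot.
Open Scope R_scope.
From Stdlib Require Import Lra Lia.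

Definition qscal (r:R) (q:quat) := Quat (r*q0 q) (r*q1 q) (r*q2 q) (r*q3 q).
Definition qnorm2 (q:quat) := q0 q*q0 q + q1 q*q1 q + q2 q*q2 q + q3 q*q3 q.
Definition qk := Quat 0 0 0 1.
Definition PV (q:quat) := Quat (q0 q) (q1 q) (q2 q) 0.

Ltac qsolve := cbv beta iota delta [qk PV qnorm2 qscal qmul qadd qconj qprime qopp qzero h2inner h2add q0 q1 q2 q3 fst snd];
  repeat match goal with |- Quat _ _ _ _ = Quat _ _ _ _ => f_equal | |- (_,_) = (_,_) => f_equal end; ring.

Lemma orth_gen xi eta x w :
  h2inner (qmul xi x, qmul eta x) (qmul (qprime eta) w, qmul (qopp (qprime xi)) w)
  = 2 * q3 (qmul xi (qconj eta)) * q0 (qmul qk (qmul x (qconj w))).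
Proof. destruct xi, eta, x, w. qsolve. Qed.

Lemma mul_conj_U A B U : qmul (qmul A U) (qconj (qmul B U)) = qscal (qnorm2 U) (qmul A (qconj B)).
Proof. destruct A, B, U. qsolve. Qed.

Lemma curve_core (a b c d e f g h t w0 w1 w2 : R) :
  let xi := Quat a b c d in let eta := Quat e f g h in let w := Quat w0 w1 w2 0 in
  q3 (qmul (qadd xi (qscal t (qmul (qprime eta) w))) (qconj (qadd eta (qscal t (qmul (qopp (qprime xi)) w)))))
  = (1 + t*t*qnorm2 w) * q3 (qmul xi (qconj eta)).
Proof. cbv zeta. qsolve. Qed.

Lemma curve_gen (a b c d e f g h t h0 h1 h2 h3 w0 w1 w2 : R) :
  let xi := Quat a b c d in let eta := Quat e f g h in let w := Quat w0 w1 w2 0 in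
  let u := Quat (1 + t*h0) (t*h1) (t*h2) (t*h3) in
  q3 (qmul (qmul (qadd xi (qscal t (qmul (qprime eta) w))) u) (qconj (qmul (qadd eta (qscal t (qmul (qopp (qprime xi)) w))) u)))
  = qnorm2 u * (1 + t*t*qnorm2 w) * q3 (qmul xi (qconj eta)).
Proof. cbv zeta. rewrite mul_conj_U. unfold qscal at 1. cbn [q3]. rewrite curve_core. ring. Qed.

Lemma norm_gen (a b c d e f g h t w0 w1 w2 : R) :
  let xi := Quat a b c d in let eta := Quat e f g h in let w := Quat w0 w1 w2 0 in
  qnorm2 (qadd xi (qscal t (qmul (qprime eta) w))) + qnorm2 (qadd eta (qscal t (qmul (qopp (qprime xi)) w)))
  = (qnorm2 xi + qnorm2 eta) * (1 + t*t*qnorm2 w).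
Proof. cbv zeta. qsolve. Qed.

Lemma mulnorm p q : qnorm2 (qmul p q) = qnorm2 p * qnorm2 q.
Proof. destruct p, q. qsolve. Qed.

Lemma decomp_a xi eta al be :
  let N := qnorm2 xi + qnorm2 eta in
  let y := qadd (qmul (qconj xi) al) (qmul (qconj eta) be) in
  let x := qadd (qmul (qconj (qprime eta)) al) (qopp (qmul (qconj (qprime xi)) be)) in
  qscal N al = qadd (qadd (qadd (qmul xi y) (qmul (qprime eta) (PV x)))
     (qscal (-2 * q3 (qmul xi (qconj eta))) (qmul qk be)))
     (qscal (q3 (qadd (qmul al (qconj eta)) (qmul xi (qconj be)))) (qmul (qprime eta) qk)).
Proof. cbv zeta. destruct xi, eta, al, be. qsolve. Qed.

Lemma decomp_b xi eta al be :
  let N := qnorm2 xi + qnorm2 eta in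
  let y := qadd (qmul (qconj xi) al) (qmul (qconj eta) be) in
  let x := qadd (qmul (qconj (qprime eta)) al) (qopp (qmul (qconj (qprime xi)) be)) in
  qscal N be = qadd (qadd (qadd (qmul eta y) (qmul (qopp (qprime xi)) (PV x)))
     (qscal (2 * q3 (qmul xi (qconj eta))) (qmul qk al)))
     (qscal (- q3 (qadd (qmul al (qconj eta)) (qmul xi (qconj be)))) (qmul (qprime xi) qk)).
Proof. cbv zeta. destruct xi, eta, al, be. qsolve. Qed.

Lemma qscal_mul_r p r q : qmul p (qscal r q) = qscal r (qmul p q).
Proof. destruct p, q. qsolve. Qed.
Lemma qadd_scal r p q : qadd (qscal r p) (qscal r q) = qscal r (qadd p q).
Proof. destruct p, q. qsolve. Qed.
Lemma qscal_0 q : qscal 0 q = qzero.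
Proof. destruct q. qsolve. Qed.
Lemma qadd_0_r q : qadd q qzero = q.
Proof. destruct q. qsolve. Qed.
Lemma qscal_inv r q : r <> 0 -> qscal (/r) (qscal r q) = q.
Proof. intro. destruct q. unfold qscal; simpl; f_equal; field; auto. Qed.

Lemma SH_N xi eta : SH (xi, eta) -> 0 < qnorm2 xi + qnorm2 eta.
Proof.
  intros [Hne _]. apply Rnot_le_lt. intro Hle. apply Hne.
  destruct xi as [a b c d], eta as [e f g h]. unfold qnorm2 in Hle; simpl in Hle.
  assert (a = 0) by nra. assert (b = 0) by nra. assert (c = 0) by nra. assert (d = 0) by nra.
  assert (e = 0) by nra. assert (f = 0) by nra. assert (g = 0) by nra. assert (h = 0) by nra.
  subst. reflexivity.
Qed.

Lemma quad_Dn (a b c : R) (m : nat) :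
  exists a' b' c', forall s, Derive_n (fun s => a + s * b + s * s * c) m s = a' + s * b' + s * s * c'.
Proof.
  induction m as [|m IH].
  - exists a, b, c. intro s. reflexivity.
  - destruct IH as (a' & b' & c' & H).
    exists b', (2 * c'), 0. intro s. simpl.
    rewrite (Derive_ext _ (fun s => a' + s * b' + s * s * c') s H).
    apply is_derive_unique. auto_derive; auto. ring.
Qed.

Lemma quad_smooth (a b c : R) (m : nat) (t : R) :
  ex_derive_n (fun s => a + s * b + s * s * c) m t.
Proof.
  destruct m as [|m]; simpl; auto.
  destruct (quad_Dn a b c m) as (a' & b' & c' & H).
  apply (ex_derive_ext (fun s => a' + s * b' + s * s * c')).
  - intro s. symmetry. apply H.
  - auto_derive. auto.
Qed.

Lemma D_mul (f g : R -> R) x df dg : is_derive f x df -> is_derive g x dg ->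
  is_derive (fun s => f s * g s) x (df * g x + f x * dg).
Proof. intros H1 H2. exact (is_derive_mult f g x df dg H1 H2 Rmult_comm). Qed.
Lemma D_add (f g : R -> R) x df dg : is_derive f x df -> is_derive g x dg ->
  is_derive (fun s => f s + g s) x (df + dg).
Proof. intros H1 H2. exact (is_derive_plus f g x df dg H1 H2). Qed.
Lemma D_sub (f g : R -> R) x df dg : is_derive f x df -> is_derive g x dg ->
  is_derive (fun s => f s - g s) x (df - dg).
Proof. intros H1 H2. exact (is_derive_minus f g x df dg H1 H2). Qed.
Lemma D_opp (f : R -> R) x df : is_derive f x df ->
  is_derive (fun s => - f s) x (- df).
Proof. intros H1. exact (is_derive_opp f x df H1). Qed.

Definition Kexpr (kp v : H2) := qadd (qmul (fst v) (qconj (snd kp))) (qmul (fst kp) (qconj (snd v))).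

Lemma T_K kp v : tangent_space SH kp v -> inV (Kexpr kp v).
Proof.
  intros (c & eps & Heps & Hsm & Hin & H0 & Hd).
  set (F := fun s => coord 0 (c s) * - coord 7 (c s) + coord 1 (c s) * - coord 6 (c s)
                     - coord 2 (c s) * - coord 5 (c s) + coord 3 (c s) * coord 4 (c s)).
  assert (HF0 : is_derive F 0 0).
  { apply is_derive_ext_loc with (f := fun _ => 0).
    - exists (mkposreal eps Heps). intros y Hy.
      assert (Hy' : Rabs y < eps).
      { unfold ball in Hy; simpl in Hy. unfold AbsRing_ball, abs, minus, plus, opp in Hy; simpl in Hy.
        replace y with (y + - 0) by ring. exact Hy. }
      destruct (Hin y Hy') as [_ HV]. unfold inV in HV. symmetry. exact HV.
    - auto_derive; auto. }
  evar (L0 : R).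
  assert (HF : is_derive F 0 L0).
  { unfold F, L0.
    assert (L : forall n, (n < 8)%nat -> is_derive (fun s => coord n (c s)) 0 (coord n v)) by exact Hd.
    apply D_add; [apply D_sub; [apply D_add|]|].
    1-3: apply D_mul; [apply L; lia | apply D_opp; apply L; lia].
    apply D_mul; apply L; lia. }
  pose proof (is_derive_unique _ _ _ HF0) as E1.
  pose proof (is_derive_unique _ _ _ HF) as E2.
  rewrite E1 in E2. unfold L0 in E2. cbv beta in E2. rewrite H0 in E2.
  destruct kp as [[a b c1 d] [e f g h]], v as [[v0 v1 v2 v3] [v4 v5 v6 v7]].
  unfold inV, Kexpr. simpl in E2 |- *. rewrite E2. ring.
Qed.

Lemma decomp_T xi eta x w : SH (xi, eta) -> inV w ->
  tangent_space SH (xi, eta)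
    (h2add (qmul xi x, qmul eta x) (qmul (qprime eta) w, qmul (qopp (qprime xi)) w)).
Proof.
  intros HSH Hw.
  pose proof (SH_N _ _ HSH) as HN.
  destruct HSH as [_ HS]. unfold inV in HS; simpl in HS.
  set (v := h2add (qmul xi x, qmul eta x) (qmul (qprime eta) w, qmul (qopp (qprime xi)) w)).
  set (u := (qmul (qmul (qprime eta) w) x, qmul (qmul (qopp (qprime xi)) w) x)).
  set (c := fun s : R => (qadd xi (qadd (qscal s (fst v)) (qscal (s*s) (fst u))),
                          qadd eta (qadd (qscal s (snd v)) (qscal (s*s) (snd u))))).
  assert (Hc : forall n s, coord n (c s) = coord n (xi, eta) + s * coord n v + s * s * coord n u).
  { intros n s. destruct n as [|[|[|[|[|[|[|[|n]]]]]]]]; unfold c, qscal, qadd; simpl; ring. }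
  exists c, (/ (1 + Rabs (q0 x))).
  assert (Hpos : 0 < 1 + Rabs (q0 x)) by (pose proof (Rabs_pos (q0 x)); lra).
  split; [apply Rinv_0_lt_compat; exact Hpos|].
  split.
  { intros n _ m t. apply (ex_derive_n_ext (fun s => coord n (xi, eta) + s * coord n v + s * s * coord n u)).
    - intro s. symmetry. apply Hc.
    - apply quad_smooth. }
  split.
  { intros t Ht.
    assert (Htx : -1 < t * q0 x < 1).
    { assert (Rabs t * (1 + Rabs (q0 x)) < 1).
      { apply (Rmult_lt_compat_r (1 + Rabs (q0 x))) in Ht; [|exact Hpos].
        rewrite Rinv_l in Ht; lra. }
      assert (Rabs (t * q0 x) < 1).
      { rewrite Rabs_mult. pose proof (Rabs_pos t). pose proof (Rabs_pos (q0 x)). nra. }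
      apply Rabs_def2 in H0. lra. }
    destruct xi as [a b c1 d], eta as [e f g h], x as [h0 h1 h2 h3], w as [w0 w1 w2 w3].
    unfold inV in Hw; simpl in Hw. subst w3. simpl in Htx.
    set (U := Quat (1 + t*h0) (t*h1) (t*h2) (t*h3)).
    assert (Ec : c t = (qmul (qadd (Quat a b c1 d) (qscal t (qmul (qprime (Quat e f g h)) (Quat w0 w1 w2 0)))) U,
                        qmul (qadd (Quat e f g h) (qscal t (qmul (qopp (qprime (Quat a b c1 d))) (Quat w0 w1 w2 0)))) U)).
    { unfold c, v, u, U. simpl. qsolve. }
    rewrite Ec. split.
    - intro E. pose proof (f_equal fst E) as E1. pose proof (f_equal snd E) as E2. cbn [fst snd] in E1, E2.
      pose proof (norm_gen a b c1 d e f g h t w0 w1 w2) as Hn. cbv zeta in Hn.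
      assert (HU : 0 < qnorm2 U) by (unfold U, qnorm2; simpl; nra).
      assert (Hw2 : 0 <= qnorm2 (Quat w0 w1 w2 0)) by (unfold qnorm2; simpl; nra).
      assert (qnorm2 (qmul (qadd (Quat a b c1 d) (qscal t (qmul (qprime (Quat e f g h)) (Quat w0 w1 w2 0)))) U) = 0).
      { rewrite E1. unfold qnorm2, qzero; simpl; ring. }
      assert (qnorm2 (qmul (qadd (Quat e f g h) (qscal t (qmul (qopp (qprime (Quat a b c1 d))) (Quat w0 w1 w2 0)))) U) = 0).
      { rewrite E2. unfold qnorm2, qzero; simpl; ring. }
      rewrite !mulnorm in H, H0.
      assert (Hsum : (qnorm2 (Quat a b c1 d) + qnorm2 (Quat e f g h)) * (1 + t * t * qnorm2 (Quat w0 w1 w2 0)) * qnorm2 U = 0).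
      { rewrite <- Hn. rewrite Rmult_plus_distr_r. rewrite H, H0. ring. }
      assert (0 < (qnorm2 (Quat a b c1 d) + qnorm2 (Quat e f g h)) * (1 + t * t * qnorm2 (Quat w0 w1 w2 0)) * qnorm2 U).
      { apply Rmult_lt_0_compat; [apply Rmult_lt_0_compat|]; auto. nra. }
      lra.
    - unfold inV. unfold fst, snd. unfold U. rewrite curve_gen. replace (q3 (qmul (Quat a b c1 d) (qconj (Quat e f g h)))) with 0 by (symmetry; exact HS). ring. }
  split.
  { unfold c. destruct xi, eta. unfold qscal, qadd; simpl. f_equal; f_equal; ring. }
  intros n _. apply (is_derive_ext (fun s => coord n (xi, eta) + s * coord n v + s * s * coord n u)).
  - intro s. symmetry. apply Hc.
  - auto_derive; auto. ring.
Qed.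

Lemma K_decomp xi eta v : SH (xi, eta) -> inV (Kexpr (xi, eta) v) ->
  setsum2 (rmulset (xi, eta) inH) (rmulset (check (xi, eta)) inV) v.
Proof.
  intros HSH HK.
  pose proof (SH_N _ _ HSH) as HN.
  destruct HSH as [_ HS]. unfold inV, Kexpr in HS, HK; cbn [fst snd] in HS, HK.
  destruct v as [al be]. cbn [fst snd] in HK.
  set (N := qnorm2 xi + qnorm2 eta) in *.
  set (y := qadd (qmul (qconj xi) al) (qmul (qconj eta) be)).
  set (x := qadd (qmul (qconj (qprime eta)) al) (qopp (qmul (qconj (qprime xi)) be))).
  set (h := qscal (/N) y). set (w := qscal (/N) (PV x)).
  exists (qmul xi h, qmul eta h), (qmul (qprime eta) w, qmul (qopp (qprime xi)) w).
  split; [exists h; split; [exact I | reflexivity]|].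
  split; [exists w; split; [unfold inV, w, PV, qscal; simpl; ring | reflexivity]|].
  pose proof (decomp_a xi eta al be) as Da. pose proof (decomp_b xi eta al be) as Db.
  cbv zeta in Da, Db. fold N y x in Da, Db.
  rewrite HS, HK in Da, Db. rewrite Rmult_0_r, !qscal_0, !qadd_0_r in Da. rewrite Rmult_0_r, Ropp_0, !qscal_0, !qadd_0_r in Db.
  assert (HN' : N <> 0) by lra.
  unfold h2add, h, w; simpl. rewrite !qscal_mul_r, !qadd_scal.
  rewrite <- Da, <- Db, !qscal_inv by exact HN'. reflexivity.
Qed.

Theorem lemma3p11 (kp : H2) : SH kp ->
  (* T_kappa SH = {(alpha,beta) : alpha bar eta + xi bar beta in V} *)
  (forall v : H2, tangent_space SH kp v <->
     inV (qadd (qmul (fst v) (qconj (snd kp))) (qmul (fst kp) (qconj (snd v))))) /\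
  (* T_kappa SH = kappa H (+) check kappa V, orthogonal *)
  (forall v : H2, tangent_space SH kp v <->
     setsum2 (rmulset kp inH) (rmulset (check kp) inV) v) /\
  orth (rmulset kp inH) (rmulset (check kp) inV) /\
  (* T_kappa SH = kappa R (+) kappa I (+) check kappa V, pairwise orthogonal *)
  (forall v : H2, tangent_space SH kp v <->
     setsum2 (setsum2 (rmulset kp inReal) (rmulset kp inI))
             (rmulset (check kp) inV) v) /\
  orth (rmulset kp inReal) (rmulset kp inI) /\
  orth (rmulset kp inReal) (rmulset (check kp) inV) /\
  orth (rmulset kp inI) (rmulset (check kp) inV).
Proof.
  intro HSH. destruct kp as [xi eta].
  assert (HS : q3 (qmul xi (qconj eta)) = 0) by (destruct HSH as [_ H]; exact H).
  assert (S2T : forall v, setsum2 (rmulset (xi, eta) inH) (rmulset (check (xi, eta)) inV) v ->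
                  tangent_space SH (xi, eta) v).
  { intros v (a & b & [x [_ Ha]] & [w [Hw Hb]] & Hv). subst. simpl. apply decomp_T; auto. }
  assert (T2S : forall v, tangent_space SH (xi, eta) v ->
                  setsum2 (rmulset (xi, eta) inH) (rmulset (check (xi, eta)) inV) v).
  { intros v Hv. apply K_decomp; auto. apply T_K; auto. }
  assert (OHV : orth (rmulset (xi, eta) inH) (rmulset (check (xi, eta)) inV)).
  { intros a b [x [_ Ha]] [w [_ Hb]]. subst. simpl. rewrite orth_gen, HS. ring. }
  split; [|split; [|split; [|split; [|split; [|split]]]]].
  - intro v. split.
    + intro Hv. exact (T_K _ _ Hv).
    + intro HK. apply S2T. apply K_decomp; auto.
  - intro v; split; auto.
  - exact OHV.
  - intro v; split.
    + intro Hv. destruct (T2S v Hv) as (a & b & [x [_ Ha]] & Hb & Ev).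
      destruct x as [x0 x1 x2 x3].
      exists (qmul xi (Quat x0 x1 x2 x3), qmul eta (Quat x0 x1 x2 x3)), b. split; [|split; auto].
      exists (qmul xi (Quat x0 0 0 0), qmul eta (Quat x0 0 0 0)), (qmul xi (Quat 0 x1 x2 x3), qmul eta (Quat 0 x1 x2 x3)).
      split; [exists (Quat x0 0 0 0); split; [unfold inReal; simpl; auto | reflexivity]|].
      split; [exists (Quat 0 x1 x2 x3); split; [unfold inI; simpl; auto | reflexivity]|].
      destruct xi, eta. qsolve.
      subst; reflexivity.
    + intros (a & b & (a1 & a2 & [r [Hr Ha1]] & [i [Hi Ha2]] & Ha) & Hb & Ev).
      apply S2T. exists (qmul xi (qadd r i), qmul eta (qadd r i)), b.
      split; [exists (qadd r i); split; [exact I | reflexivity]|].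
      split; auto. subst. destruct xi, eta, r, i. qsolve.
  - intros a b [r [Hr Ha]] [x [Hx Hb]]. subst.
    destruct xi, eta, r as [r0 r1 r2 r3], x as [x0 x1 x2 x3].
    unfold inReal, inI in *; simpl in *. destruct Hr as (-> & -> & ->). subst x0. qsolve.
  - intros a b [r [_ Ha]] Hb. apply OHV; auto. exists r; split; [exact I | exact Ha].
  - intros a b [r [_ Ha]] Hb. apply OHV; auto. exists r; split; [exact I | exact Ha].
Qed.
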